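(* Let $P_0$ be a distribution with a uniformly continuous density $p_0$ on $\mathbb{R}$, with distribution function $F_0\colon[-\infty,\infty]\to[0,1]$. For $u\in[0,1]$ define $F_0^{-1}(u) := \inf\{z\in[-\infty,\infty]:F_0(z)\ge u\}$ and $J_0(u) := (p_0\circ F_0^{-1})(u)$ (with $p_0(\pm\infty):=0$). Then both $J_0$ and its least concave majorant $\hat J_0$ on $[0,1]$ are continuous, with $p_0 = J_0\circ F_0$ on $\mathbb{R}$, and $\psi_0^* := \hat J_0^{(\mathrm{R})}\circ F_0$ is decreasing and right-continuous as a function from $\mathbb{R}$ to $[-\infty,\infty]$, provided that we set $\hat J_0^{(\mathrm{R})}(1) := \lim_{u\nearrow1}\hat J_0^{(\mathrm{R})}(u)$. Moreover, $\psi_0^*(z)\in\mathbb{R}$ if and only if $z\in\mathcal{S}_0$.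
   Context: $\hat J_0^{(\mathrm{R})}$ denotes the right derivative of $\hat J_0$. $\mathcal{S}_0 := (\inf\{z:p_0(z)>0\},\sup\{z:p_0(z)>0\})$. *)

(* Defs.v *)
From Stdlib Require Import Reals ClassicalEpsilon.
From Coquelicot Require Import Coquelicot.
Open Scope R_scope.

Definition is_density (p : R -> R) : Prop :=
  (forall x, 0 <= p x) /\
  is_RInt_gen p (Rbar_locally m_infty) (Rbar_locally p_infty) 1.

Definition unif_cont (p : R -> R) : Prop :=
  forall eps : R, 0 < eps -> exists delta : R, 0 < delta /\
    forall x y, Rabs (x - y) < delta -> Rabs (p x - p y) < eps.

Definition distF (p : R -> R) (z : R) : R :=
  RInt_gen p (Rbar_locally m_infty) (at_point z).

Definition distF_bar (p : R -> R) (z : Rbar) : R :=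
  match z with
  | Finite x => distF p x
  | p_infty => 1
  | m_infty => 0
  end.

Definition quantile (p : R -> R) (u : R) : Rbar :=
  Rbar_glb (fun z : Rbar => u <= distF_bar p z).

Definition p_bar (p : R -> R) (z : Rbar) : R :=
  match z with Finite x => p x | _ => 0 end.

Definition Jfun (p : R -> R) (u : R) : R := p_bar p (quantile p u).

Definition concave_on01 (g : R -> R) : Prop :=
  forall x y t, 0 <= x <= 1 -> 0 <= y <= 1 -> 0 <= t <= 1 ->
    t * g x + (1 - t) * g y <= g (t * x + (1 - t) * y).

Definition lcm01 (J : R -> R) (u : R) : R :=
  real (Glb_Rbar (fun y => exists g : R -> R,
           concave_on01 g /\ (forall v, 0 <= v <= 1 -> J v <= g v) /\ y = g u)).

Definition ext_nbhs (l : Rbar) (P : Rbar -> Prop) : Prop :=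
  match l with
  | Finite x => exists eps : posreal, forall y : Rbar,
      (exists r : R, y = Finite r /\ Rabs (r - x) < eps) -> P y
  | p_infty => exists M : R, forall y : Rbar, Rbar_lt M y -> P y
  | m_infty => exists M : R, forall y : Rbar, Rbar_lt y M -> P y
  end.

Definition ext_lim (g : R -> Rbar) (F : (R -> Prop) -> Prop) : Rbar :=
  epsilon (inhabits (Finite 0)) (fun l => filterlim g F (ext_nbhs l)).

Definition right_deriv (H : R -> R) (u : R) : Rbar :=
  ext_lim (fun h => Finite ((H (u + h) - H u) / h)) (at_right 0).

Definition right_deriv01 (H : R -> R) (u : R) : Rbar :=
  if Req_EM_T u 1 then ext_lim (right_deriv H) (at_left 1)
  else right_deriv H u.

Definition psi_star (p : R -> R) (z : R) : Rbar :=
  right_deriv01 (lcm01 (Jfun p)) (distF p z).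

Definition continuous_on01 (f : R -> R) : Prop :=
  forall u, 0 <= u <= 1 ->
    filterlim f (within (fun v => 0 <= v <= 1) (locally u)) (locally (f u)).

(** endpoints of the support interval S_0 *)
Definition supp_inf (p : R -> R) : Rbar := Glb_Rbar (fun z => 0 < p z).
Definition supp_sup (p : R -> R) : Rbar := Lub_Rbar (fun z => 0 < p z).

(* Main.v *)
Require Import Defs.
From Stdlib Require Import Reals Lra ClassicalEpsilon Classical.
From Coquelicot Require Import Coquelicot.
Open Scope R_scope.

Lemma ext_nbhs_lt l c : Rbar_lt l (Finite c) -> ext_nbhs l (fun w => Rbar_lt w (Finite c)).
Proof.
  destruct l as [x| |]; simpl; intros H.
  - exists (mkposreal (c - x) ltac:(lra)). intros y [r [-> Hr]]. simpl in *.
    apply Rabs_def2 in Hr. lra.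
  - tauto.
  - exists c. intros y Hy. exact Hy.
Qed.

Lemma ext_nbhs_gt l c : Rbar_lt (Finite c) l -> ext_nbhs l (fun w => Rbar_lt (Finite c) w).
Proof.
  destruct l as [x| |]; simpl; intros H.
  - exists (mkposreal (x - c) ltac:(lra)). intros y [r [-> Hr]]. simpl in *.
    apply Rabs_def2 in Hr. lra.
  - exists c. intros y Hy. exact Hy.
  - tauto.
Qed.

Lemma Rbar_between l1 l2 : Rbar_lt l1 l2 -> exists c : R, Rbar_lt l1 c /\ Rbar_lt c l2.
Proof.
  destruct l1 as [x| |]; destruct l2 as [y| |]; simpl; intros H; try tauto.
  - exists ((x + y)/2). simpl. lra.
  - exists (x + 1). simpl. lra.
  - exists (y - 1). simpl. lra.
  - exists 0. simpl. tauto.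
Qed.

Lemma ext_lim_uniq {T} (F : (T -> Prop) -> Prop) {FF : ProperFilter F} (g : T -> Rbar) l1 l2 :
  filterlim g F (ext_nbhs l1) -> filterlim g F (ext_nbhs l2) -> l1 = l2.
Proof.
  intros H1 H2.
  assert (K : forall a b, filterlim g F (ext_nbhs a) -> filterlim g F (ext_nbhs b) -> ~ Rbar_lt a b).
  { intros a b Ha Hb Hab. destruct (Rbar_between a b Hab) as [c [Hc1 Hc2]].
    generalize (Ha _ (ext_nbhs_lt a c Hc1)) (Hb _ (ext_nbhs_gt b c Hc2)). unfold filtermap. intros P1 P2.
    destruct (filter_ex _ (filter_and _ _ P1 P2)) as [x [Q1 Q2]].
    destruct (g x) as [r| |]; simpl in *; try tauto. lra. }
  generalize (K _ _ H1 H2) (K _ _ H2 H1). intros N1 N2.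
  apply Rbar_le_antisym; apply Rbar_not_lt_le; auto.
Qed.

Lemma ext_lim_eq (F : (R -> Prop) -> Prop) {FF : ProperFilter F} (g : R -> Rbar) l :
  filterlim g F (ext_nbhs l) -> ext_lim g F = l.
Proof.
  intros H. unfold ext_lim.
  assert (E : exists l, filterlim g F (ext_nbhs l)) by (exists l; exact H).
  generalize (epsilon_spec (inhabits (Finite 0)) _ E). intros K.
  exact (ext_lim_uniq F g _ _ K H).
Qed.

Lemma div_le A1 A2 k1 k2 : 0 < k1 -> 0 < k2 -> A2 * k1 <= A1 * k2 -> A2 / k2 <= A1 / k1.
Proof.
  intros. apply (Rmult_le_reg_r (k1 * k2)). nra.
  replace (A2 / k2 * (k1 * k2)) with (A2 * k1) by (field; lra).
  replace (A1 / k1 * (k1 * k2)) with (A1 * k2) by (field; lra). auto.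
Qed.

Section Conc.
Variable H : R -> R.
Hypothesis Hc : concave_on01 H.

Lemma chord a m b : 0 <= a -> a < b -> b <= 1 -> a <= m <= b ->
  (b - m) * H a + (m - a) * H b <= (b - a) * H m.
Proof.
  intros. set (t := (b - m) / (b - a)).
  assert (Ht : 0 <= t <= 1).
  { unfold t. split. apply Rdiv_le_0_compat; lra. apply (Rmult_le_reg_r (b - a)). lra.
    replace ((b - m) / (b - a) * (b - a)) with (b - m) by (field; lra). lra. }
  generalize (Hc a b t ltac:(lra) ltac:(lra) Ht).
  replace (t * a + (1 - t) * b) with m by (unfold t; field; lra).
  intros K. apply (Rmult_le_compat_l (b - a)) in K. 2: lra.
  replace ((b - a) * (t * H a + (1 - t) * H b)) with ((b - m) * H a + (m - a) * H b) in K
    by (unfold t; field; lra). exact K.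
Qed.

Definition slope u k := (H (u + k) - H u) / k.

Lemma S1 u k1 k2 : 0 <= u -> 0 < k1 -> k1 <= k2 -> u + k2 <= 1 -> slope u k2 <= slope u k1.
Proof.
  intros. unfold slope. apply div_le; try lra.
  generalize (chord u (u + k1) (u + k2) H0 ltac:(lra) H3 ltac:(lra)). intros K. nra.
Qed.

Lemma S2 w u k : 0 <= w -> w < u -> 0 < k -> u + k <= 1 -> slope u k <= (H u - H w) / (u - w).
Proof.
  intros. unfold slope. apply div_le; try lra.
  generalize (chord w u (u + k) H0 ltac:(lra) H3 ltac:(lra)). intros K. nra.
Qed.

Lemma lip x y : 0 < x < 1 -> 0 <= y <= 1 ->
  Rabs (H y - H x) <= (Rabs (H x - H 0) / x + Rabs (H 1 - H x) / (1 - x)) * Rabs (y - x).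
Proof.
  intros Hx Hy. set (a := Rabs (H x - H 0) / x). set (b := Rabs (H 1 - H x) / (1 - x)).
  assert (Ha : a * x = Rabs (H x - H 0)) by (unfold a; field; lra).
  assert (Hb : b * (1 - x) = Rabs (H 1 - H x)) by (unfold b; field; lra).
  assert (a0 : 0 <= a) by (unfold a; apply Rdiv_le_0_compat; [apply Rabs_pos|lra]).
  assert (b0 : 0 <= b) by (unfold b; apply Rdiv_le_0_compat; [apply Rabs_pos|lra]).
  generalize (Rle_abs (H x - H 0)) (Rle_abs (- (H x - H 0))) (Rle_abs (H 1 - H x)) (Rle_abs (- (H 1 - H x))).
  rewrite !Rabs_Ropp. intros R1 R2 R3 R4.
  destruct (Rle_or_lt x y).
  - rewrite (Rabs_right (y - x)) by lra.
    destruct (Req_dec x y). subst. rewrite Rminus_diag, Rabs_R0. lra.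
    generalize (chord x y 1 ltac:(lra) ltac:(lra) ltac:(lra) ltac:(lra)). intros C1.
    generalize (chord 0 x y ltac:(lra) ltac:(lra) ltac:(lra) ltac:(lra)). intros C2.
    assert (L1 : (1 - x) * (H y - H x) >= - (y - x) * Rabs (H 1 - H x)) by nra.
    assert (L2 : x * (H y - H x) <= (y - x) * Rabs (H x - H 0)) by nra.
    assert (L1' : H y - H x >= - (y - x) * b) by (rewrite <- Hb in L1; nra).
    assert (L2' : H y - H x <= (y - x) * a) by (rewrite <- Ha in L2; nra).
    apply Rabs_le. split; nra.
  - rewrite (Rabs_left (y - x)) by lra.
    generalize (chord y x 1 ltac:(lra) ltac:(lra) ltac:(lra) ltac:(lra)). intros C1.
    generalize (chord 0 y x ltac:(lra) ltac:(lra) ltac:(lra) ltac:(lra)). intros C2.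
    assert (L1 : (1 - x) * (H y - H x) <= (x - y) * Rabs (H 1 - H x)) by nra.
    assert (L2 : x * (H y - H x) >= - (x - y) * Rabs (H x - H 0)) by nra.
    assert (L1' : H y - H x <= (x - y) * b) by (rewrite <- Hb in L1; nra).
    assert (L2' : H y - H x >= - (x - y) * a) by (rewrite <- Ha in L2; nra).
    apply Rabs_le. split; nra.
Qed.


Lemma rd_mid u : 0 < u < 1 -> exists d, right_deriv H u = Finite d /\
  (forall k, 0 < k -> k <= 1 - u -> slope u k <= d) /\
  (forall w, 0 <= w -> w < u -> d <= (H u - H w) / (u - w)) /\
  (forall t, t < d -> exists k, 0 < k /\ k <= 1 - u /\ t < slope u k).
Proof.
  intros Hu. set (E := fun y => exists k, 0 < k /\ k <= 1 - u /\ y = slope u k).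
  assert (Hb : bound E).
  { exists ((H u - H 0) / (u - 0)). intros y [k [K1 [K2 ->]]]. apply S2; lra. }
  assert (Hn : exists x, E x) by (exists (slope u (1 - u)); exists (1 - u); repeat split; lra).
  destruct (completeness E Hb Hn) as [m [Hm1 Hm2]].
  assert (Up : forall k, 0 < k -> k <= 1 - u -> slope u k <= m).
  { intros k K1 K2. apply Hm1. exists k; auto. }
  assert (Ap : forall t, t < m -> exists k, 0 < k /\ k <= 1 - u /\ t < slope u k).
  { intros t Ht. apply NNPP. intro N. assert (m <= t). apply Hm2. intros y [k [K1 [K2 ->]]].
    apply Rnot_lt_le. intro C. apply N. exists k; auto. lra. }
  exists m. split; [|split; [exact Up|split; [|exact Ap]]].
  - apply (ext_lim_eq (at_right 0)). intros P [eps HP]. unfold filtermap.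
    destruct (Ap (m - eps)) as [k0 [K1 [K2 K3]]]. destruct eps; simpl; lra.
    exists (mkposreal k0 K1). intros h Hh Hh0. simpl in Hh. change (Rabs (h - 0) < k0) in Hh.
    rewrite Rminus_0_r, Rabs_right in Hh by lra.
    apply HP. exists (slope u h). split. reflexivity.
    generalize (S1 u h k0 ltac:(lra) Hh0 ltac:(lra) ltac:(lra)) (Up h Hh0 ltac:(lra)). intros.
    apply Rabs_def1; lra.
  - intros w W1 W2. apply Hm2. intros y [k [K1 [K2 ->]]]. apply S2; lra.
Qed.

Lemma rd_zero : H 0 = 0 -> (forall M, exists h, 0 < h < 1 /\ M * h < H h) -> right_deriv H 0 = p_infty.
Proof.
  intros H0 Hu. apply (ext_lim_eq (at_right 0)). intros P [M HP]. unfold filtermap.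
  destruct (Hu M) as [h0 [K1 K2]].
  assert (Hs : M < slope 0 h0).
  { unfold slope. rewrite Rplus_0_l, H0, Rminus_0_r. apply (Rmult_lt_reg_r h0). lra.
    replace (H h0 / h0 * h0) with (H h0) by (field; lra). lra. }
  exists (mkposreal h0 (proj1 K1)). intros h Hh Hh0. change (Rabs (h - 0) < h0) in Hh.
  rewrite Rminus_0_r, Rabs_right in Hh by lra.
  apply HP. generalize (S1 0 h h0 ltac:(lra) Hh0 ltac:(lra) ltac:(lra)). unfold slope in *. simpl. lra.
Qed.

Lemma rd01_ne u : u <> 1 -> right_deriv01 H u = right_deriv H u.
Proof. intros. unfold right_deriv01. destruct (Req_EM_T u 1); [contradiction|reflexivity]. Qed.

Lemma rd_one : H 1 = 0 -> (forall eps, 0 < eps -> exists dl, 0 < dl /\ forall v, 1 - dl < v <= 1 -> H v < eps) ->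
  (forall M, exists u, 0 < u < 1 /\ M * (1 - u) < H u) -> right_deriv01 H 1 = m_infty.
Proof.
  intros H1 Hct Hu. unfold right_deriv01. destruct (Req_EM_T 1 1) as [_|C]; [|congruence].
  apply (ext_lim_eq (at_left 1)). intros P [M HP]. unfold filtermap.
  destruct (Hu (Rabs M + 2)) as [u0 [K1 K2]].
  destruct (Hct (1 - u0) ltac:(lra)) as [dl [Hdl Hdl2]].
  exists (mkposreal (Rmin (1 - u0) dl) ltac:(apply Rmin_pos; lra)). intros v Hv1 Hv2.
  change (Rabs (v - 1) < Rmin (1 - u0) dl) in Hv1.
  generalize (Rmin_l (1 - u0) dl) (Rmin_r (1 - u0) dl). intros M1 M2.
  rewrite Rabs_left in Hv1 by lra.
  destruct (rd_mid v ltac:(lra)) as [d [Hd [_ [Lo _]]]]. rewrite Hd. apply HP. simpl.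
  generalize (Lo u0 ltac:(lra) ltac:(lra)). intros K.
  generalize (Hdl2 v ltac:(lra)). intros Hv.
  assert (Q2 : (H v - H u0) / (v - u0) < M).
  { apply (Rmult_lt_reg_r (v - u0)). lra.
    replace ((H v - H u0) / (v - u0) * (v - u0)) with (H v - H u0) by (field; lra).
    generalize (Rle_abs (-M)). rewrite Rabs_Ropp. generalize (Rabs_pos M). intros. nra. }
  lra.
Qed.

Lemma rd_mono u1 u2 d1 d2 : 0 < u1 -> u1 < u2 -> u2 < 1 ->
  right_deriv H u1 = Finite d1 -> right_deriv H u2 = Finite d2 -> d2 <= d1.
Proof.
  intros A1 A2 A3 D1 D2. destruct (rd_mid u1 ltac:(lra)) as [e1 [E1 [Up1 _]]].
  destruct (rd_mid u2 ltac:(lra)) as [e2 [E2 [_ [Lo2 _]]]].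
  rewrite E1 in D1; rewrite E2 in D2. injection D1; injection D2; intros; subst.
  generalize (Up1 (u2 - u1) ltac:(lra) ltac:(lra)) (Lo2 u1 ltac:(lra) A2). unfold slope.
  replace (u1 + (u2 - u1)) with u2 by ring. lra.
Qed.

Lemma rd_rc u d eps : 0 < u < 1 -> right_deriv H u = Finite d -> 0 < eps ->
  exists delta, 0 < delta /\ forall v, u <= v < u + delta -> v < 1 /\
    exists dv, right_deriv H v = Finite dv /\ Rabs (dv - d) < eps.
Proof.
  intros Hu Hd He. destruct (rd_mid u Hu) as [d' [E [Up [_ Ap]]]].
  rewrite E in Hd. injection Hd; intros; subst d'.
  destruct (Ap (d - eps/2) ltac:(lra)) as [k [K1 [K2 K3]]].
  set (C := Rabs (H u - H 0) / u + Rabs (H 1 - H u) / (1 - u)).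
  assert (C0 : 0 <= C).
  { unfold C. apply Rplus_le_le_0_compat; apply Rdiv_le_0_compat; try apply Rabs_pos; lra. }
  set (sg := slope u k).
  set (D := C + Rabs sg + eps).
  assert (D0 : 0 < D) by (unfold D; generalize (Rabs_pos sg); lra).
  exists (Rmin (k/2) ((eps/2) * k / D)). split.
  { apply Rmin_pos. lra. apply Rdiv_lt_0_compat; [nra|lra]. }
  intros v [Hv1 Hv2]. generalize (Rmin_l (k/2) ((eps/2) * k / D)) (Rmin_r (k/2) ((eps/2) * k / D)). intros M1 M2.
  split. lra.
  destruct (Req_dec v u) as [->|Hne]. exists d. split. exact E. rewrite Rminus_diag, Rabs_R0. lra.
  destruct (rd_mid v ltac:(lra)) as [dv [Ev [Upv [Lov _]]]]. exists dv. split. exact Ev.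
  set (e := v - u).
  assert (He0 : 0 < e) by (unfold e; lra).
  assert (HeD : e * D <= (eps/2) * k).
  { assert (Ee : e < (eps/2) * k / D) by (unfold e; lra).
    apply Rlt_le. apply (Rmult_lt_compat_r D) in Ee. replace ((eps/2) * k / D * D) with ((eps/2)*k) in Ee by (field; lra). exact Ee. lra. }
  assert (Hupper : dv <= d).
  { generalize (Lov u ltac:(lra) ltac:(lra)) (Up (v - u) ltac:(lra) ltac:(lra)). unfold slope.
    replace (u + (v - u)) with v by ring. lra. }
  assert (Hlow : sg - eps/2 <= dv).
  { generalize (Upv (u + k - v) ltac:(lra) ltac:(lra)). unfold slope. replace (v + (u + k - v)) with (u + k) by ring.
    intros Q. eapply Rle_trans. 2: exact Q.
    generalize (lip u v Hu ltac:(lra)). fold C. rewrite (Rabs_right (v - u)) by lra. intros L.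
    apply Rabs_le_between in L. fold e in L.
    assert (Hsg : H (u + k) - H u = sg * k) by (unfold sg, slope; field; lra).
    apply (Rmult_le_reg_r (u + k - v)). lra.
    replace ((H (u + k) - H v) / (u + k - v) * (u + k - v)) with (H (u + k) - H v) by (field; lra).
    replace (u + k - v) with (k - e) by (unfold e; ring).
    generalize (Rle_abs sg) (Rle_abs (- sg)). rewrite Rabs_Ropp. intros A1 A2.
    unfold D in HeD. nra. }
  unfold sg in *. apply Rabs_def1; lra.
Qed.

Lemma rd_rc0 M : H 0 = 0 -> (forall eps, 0 < eps -> exists dl, 0 < dl /\ forall v, 0 <= v < dl -> H v < eps) ->
  (forall M, exists h, 0 < h < 1 /\ M * h < H h) ->
  exists delta, 0 < delta /\ forall v, 0 < v < delta -> v < 1 /\ exists dv, right_deriv H v = Finite dv /\ M < dv.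
Proof.
  intros H0 Hct Hu. destruct (Hu (Rabs M + 1)) as [h0 [K1 K2]].
  set (gap := H h0 - (Rabs M + 1) * h0).
  destruct (Hct gap ltac:(unfold gap; lra)) as [dl [Hdl Hdl2]].
  exists (Rmin (h0/2) dl). split. apply Rmin_pos; lra.
  intros v Hv. generalize (Rmin_l (h0/2) dl) (Rmin_r (h0/2) dl). intros M1 M2. split. lra.
  destruct (rd_mid v ltac:(lra)) as [dv [Ev [Upv _]]]. exists dv. split. exact Ev.
  generalize (Upv (h0 - v) ltac:(lra) ltac:(lra)). unfold slope. replace (v + (h0 - v)) with h0 by ring.
  intros Q. generalize (Hdl2 v ltac:(lra)). intros Hv2.
  assert (Q2 : Rabs M + 1 < (H h0 - H v) / (h0 - v)).
  { apply (Rmult_lt_reg_r (h0 - v)). lra.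
    replace ((H h0 - H v) / (h0 - v) * (h0 - v)) with (H h0 - H v) by (field; lra).
    unfold gap in Hv2. generalize (Rabs_pos M). nra. }
  generalize (Rle_abs M). lra.
Qed.

End Conc.

Lemma cont01_of f : (forall u, 0 <= u <= 1 -> forall eps, 0 < eps -> exists dl, 0 < dl /\
   forall v, 0 <= v <= 1 -> Rabs (v - u) < dl -> Rabs (f v - f u) < eps) -> continuous_on01 f.
Proof.
  intros H u Hu P [eps HP]. unfold filtermap, within.
  destruct (H u Hu eps (cond_pos eps)) as [dl [Hdl K]].
  exists (mkposreal dl Hdl). intros v Hv HD. apply HP. apply K. exact HD. exact Hv.
Qed.

Lemma lin_conc a b : concave_on01 (fun v => a + b * v).
Proof. intros x y t _ _ _. apply Req_le. ring. Qed.

Section Lcm.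
Variable J : R -> R.
Hypothesis HJ0 : forall u, 0 <= J u.
Variable Bj : R.
Hypothesis HJB : forall u, J u <= Bj.
Hypothesis HJe0 : forall eps, 0 < eps -> exists eta, 0 < eta /\ forall v, 0 <= v < eta -> J v < eps.
Hypothesis HJe1 : forall eps, 0 < eps -> exists eta, 0 < eta /\ forall v, 1 - eta < v <= 1 -> J v < eps.

Definition maj g := concave_on01 g /\ (forall v, 0 <= v <= 1 -> J v <= g v).

Lemma lcm_spec u : 0 <= u <= 1 -> J u <= lcm01 J u /\
  (forall g, maj g -> lcm01 J u <= g u) /\
  (forall b, (forall g, maj g -> b <= g u) -> b <= lcm01 J u).
Proof.
  intros Hu. unfold lcm01.
  set (S := fun y => exists g : R -> R, concave_on01 g /\ (forall v, 0 <= v <= 1 -> J v <= g v) /\ y = g u).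
  generalize (Glb_Rbar_correct S). destruct (Glb_Rbar S) as [m| |]; intros [lb gr]; simpl.
  - split; [|split].
    + apply (gr (Finite (J u))). intros y [g [G1 [G2 ->]]]. simpl. apply G2, Hu.
    + intros g [G1 G2]. apply (lb (g u)). exists g; auto.
    + intros b Hb. apply (gr (Finite b)). intros y [g [G1 [G2 ->]]]. simpl. apply Hb. split; auto.
  - exfalso. generalize (lb Bj). simpl. intros K; apply K. exists (fun _ => Bj). split.
    intros x y t _ _ _. lra. split; auto.
  - exfalso. generalize (gr (Finite (J u))). simpl. intros K; apply K. intros y [g [G1 [G2 ->]]]. simpl. apply G2, Hu.
Qed.

Lemma lcm_ge u : 0 <= u <= 1 -> J u <= lcm01 J u.
Proof. intros Hu; exact (proj1 (lcm_spec u Hu)). Qed.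

Lemma lcm_le u g : 0 <= u <= 1 -> maj g -> lcm01 J u <= g u.
Proof. intros Hu Hg; exact (proj1 (proj2 (lcm_spec u Hu)) g Hg). Qed.

Lemma lcm_conc : concave_on01 (lcm01 J).
Proof.
  intros x y t Hx Hy Ht. assert (Hw : 0 <= t * x + (1 - t) * y <= 1) by nra.
  apply (proj2 (proj2 (lcm_spec _ Hw))). intros g [G1 G2].
  generalize (G1 x y t Hx Hy Ht) (lcm_le x g Hx (conj G1 G2)) (lcm_le y g Hy (conj G1 G2)). intros. nra.
Qed.

Lemma Bj0 : 0 <= Bj.
Proof. generalize (HJ0 0) (HJB 0). lra. Qed.

Lemma lcm_small0 eps : 0 < eps -> exists dl, 0 < dl <= 1 /\ forall v, 0 <= v < dl -> lcm01 J v < eps.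
Proof.
  intros He. destruct (HJe0 (eps/2) ltac:(lra)) as [eta [Heta Hj]].
  generalize Bj0; intro B0.
  set (g := fun v => eps/2 + (Bj/eta) * v).
  assert (Mg : maj g).
  { split. apply lin_conc. intros v Hv. unfold g.
    assert (0 <= Bj/eta) by (apply Rdiv_le_0_compat; lra).
    destruct (Rlt_or_le v eta). generalize (Hj v ltac:(lra)). nra.
    assert (Bj <= Bj/eta * v).
    { replace Bj with (Bj/eta*eta) at 1 by (field; lra). apply Rmult_le_compat_l; lra. }
    generalize (HJB v). lra. }
  set (dl := Rmin 1 (eps * eta / (2 * (Bj + 1)))).
  assert (P0 : 0 < eps * eta / (2 * (Bj + 1))) by (apply Rdiv_lt_0_compat; nra).
  exists dl. split. split. unfold dl; apply Rmin_pos; lra. apply Rmin_l.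
  intros v Hv. generalize (Rmin_l 1 (eps * eta / (2 * (Bj + 1)))) (Rmin_r 1 (eps * eta / (2 * (Bj + 1)))).
  fold dl. intros M1 M2.
  apply Rle_lt_trans with (g v). apply lcm_le; auto. lra.
  unfold g. assert (Bj / eta * v < eps/2); [|lra].
  apply (Rmult_lt_reg_r eta). lra. replace (Bj / eta * v * eta) with (Bj * v) by (field; lra).
  assert (v * (2 * (Bj + 1)) < eps * eta).
  { apply (Rmult_lt_reg_r (/ (2 * (Bj + 1)))). apply Rinv_0_lt_compat; lra.
    replace (v * (2 * (Bj + 1)) * / (2 * (Bj + 1))) with v by (field; lra). 
    replace (eps * eta * / (2 * (Bj + 1))) with (eps * eta / (2 * (Bj + 1))) by (field; lra). lra. }
  nra.
Qed.

Lemma lcm_small1 eps : 0 < eps -> exists dl, 0 < dl <= 1 /\ forall v, 1 - dl < v <= 1 -> lcm01 J v < eps.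
Proof.
  intros He. destruct (HJe1 (eps/2) ltac:(lra)) as [eta [Heta Hj]].
  generalize Bj0; intro B0.
  set (g := fun v => (eps/2 + Bj/eta) + (- (Bj/eta)) * v).
  assert (Mg : maj g).
  { split. apply lin_conc. intros v Hv. unfold g.
    assert (0 <= Bj/eta) by (apply Rdiv_le_0_compat; lra).
    destruct (Rlt_or_le (1 - eta) v). generalize (Hj v ltac:(lra)). nra.
    assert (Bj <= Bj/eta * (1 - v)).
    { replace Bj with (Bj/eta*eta) at 1 by (field; lra). apply Rmult_le_compat_l; lra. }
    generalize (HJB v). lra. }
  set (dl := Rmin 1 (eps * eta / (2 * (Bj + 1)))).
  assert (P0 : 0 < eps * eta / (2 * (Bj + 1))) by (apply Rdiv_lt_0_compat; nra).
  exists dl. split. split. unfold dl; apply Rmin_pos; lra. apply Rmin_l.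
  intros v Hv. generalize (Rmin_l 1 (eps * eta / (2 * (Bj + 1)))) (Rmin_r 1 (eps * eta / (2 * (Bj + 1)))).
  fold dl. intros M1 M2.
  apply Rle_lt_trans with (g v). apply lcm_le; auto. lra.
  unfold g. assert (Bj / eta * (1 - v) < eps/2); [|lra].
  apply (Rmult_lt_reg_r eta). lra. replace (Bj / eta * (1 - v) * eta) with (Bj * (1 - v)) by (field; lra).
  assert ((1 - v) * (2 * (Bj + 1)) < eps * eta).
  { apply (Rmult_lt_reg_r (/ (2 * (Bj + 1)))). apply Rinv_0_lt_compat; lra.
    replace ((1 - v) * (2 * (Bj + 1)) * / (2 * (Bj + 1))) with (1 - v) by (field; lra). 
    replace (eps * eta * / (2 * (Bj + 1))) with (eps * eta / (2 * (Bj + 1))) by (field; lra). lra. }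
  nra.
Qed.

Lemma lcm_nonneg u : 0 <= u <= 1 -> 0 <= lcm01 J u.
Proof. intros. generalize (lcm_ge u H) (HJ0 u). lra. Qed.

Lemma lcm0 : lcm01 J 0 = 0.
Proof.
  apply Rle_antisym. 2: apply lcm_nonneg; lra.
  apply Rnot_lt_le. intro C. destruct (lcm_small0 _ C) as [dl [Hdl K]]. generalize (K 0 ltac:(lra)). lra.
Qed.

Lemma lcm1 : lcm01 J 1 = 0.
Proof.
  apply Rle_antisym. 2: apply lcm_nonneg; lra.
  apply Rnot_lt_le. intro C. destruct (lcm_small1 _ C) as [dl [Hdl K]]. generalize (K 1 ltac:(lra)). lra.
Qed.

Lemma lcm_cont : continuous_on01 (lcm01 J).
Proof.
  apply cont01_of. intros u Hu eps He.
  destruct (Req_dec u 0) as [->|N0].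
  { destruct (lcm_small0 eps He) as [dl [Hdl K]]. exists dl. split. lra.
    intros v Hv Hvd. rewrite lcm0, Rminus_0_r. rewrite Rminus_0_r in Hvd.
    rewrite Rabs_right in Hvd by lra. rewrite Rabs_right. apply K; lra. apply Rle_ge, lcm_nonneg; auto. }
  destruct (Req_dec u 1) as [->|N1].
  { destruct (lcm_small1 eps He) as [dl [Hdl K]]. exists dl. split. lra.
    intros v Hv Hvd. rewrite lcm1, Rminus_0_r.
    rewrite Rabs_left1 in Hvd by lra. rewrite Rabs_right. apply K; lra. apply Rle_ge, lcm_nonneg; auto. }
  set (C := Rabs (lcm01 J u - lcm01 J 0) / u + Rabs (lcm01 J 1 - lcm01 J u) / (1 - u)).
  assert (C0 : 0 <= C).
  { unfold C. apply Rplus_le_le_0_compat; apply Rdiv_le_0_compat; try apply Rabs_pos; lra. }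
  exists (eps / (C + 1)). split. apply Rdiv_lt_0_compat; lra.
  intros v Hv Hvd. generalize (lip (lcm01 J) lcm_conc u v ltac:(lra) Hv). fold C. intros L.
  apply Rle_lt_trans with (C * Rabs (v - u)). exact L.
  assert (Rabs (v - u) * (C + 1) < eps).
  { apply (Rmult_lt_reg_r (/ (C + 1))). apply Rinv_0_lt_compat; lra.
    replace (Rabs (v - u) * (C + 1) * / (C + 1)) with (Rabs (v - u)) by (field; lra). exact Hvd. }
  generalize (Rabs_pos (v - u)). nra.
Qed.

End Lcm.

Section Dens.
Variable p : R -> R.
Hypothesis Hpos : forall x, 0 <= p x.
Hypothesis Hint : is_RInt_gen p (Rbar_locally m_infty) (Rbar_locally p_infty) 1.
Hypothesis Huc : unif_cont p.

Lemma p_cont x : continuous p x.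
Proof.
  intros P [eps HP]. destruct (Huc eps (cond_pos eps)) as [d [Hd H]].
  exists (mkposreal d Hd). intros y Hy. apply HP. apply H. exact Hy.
Qed.

Lemma exR a b : ex_RInt p a b.
Proof. apply (ex_RInt_continuous (V := R_CompleteNormedModule)). intros; apply p_cont. Qed.

Lemma I_ch a b c : RInt p a b + RInt p b c = RInt p a c.
Proof. rewrite <- (RInt_Chasles p a b c) by apply exR. reflexivity. Qed.

Lemma I_nonneg a b : a <= b -> 0 <= RInt p a b.
Proof. intros. apply RInt_ge_0. exact H. apply exR. intros; apply Hpos. Qed.

Lemma I_lower a b c : a <= b -> (forall x, a <= x <= b -> c <= p x) -> c * (b - a) <= RInt p a b.
Proof.
  intros Hab H. replace (c * (b - a)) with (RInt (fun _ => c) a b).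
  2:{ rewrite RInt_const. unfold scal; simpl. unfold mult; simpl. ring. }
  apply RInt_le; auto. apply ex_RInt_const. apply exR. intros; apply H; lra.
Qed.

Lemma I_upper a b c : a <= b -> (forall x, a <= x <= b -> p x <= c) -> RInt p a b <= c * (b - a).
Proof.
  intros Hab H. replace (c * (b - a)) with (RInt (fun _ => c) a b).
  2:{ rewrite RInt_const. unfold scal; simpl. unfold mult; simpl. ring. }
  apply RInt_le; auto. apply exR. apply ex_RInt_const. intros; apply H; lra.
Qed.

Lemma total eps : 0 < eps -> exists A B, forall a b, a < A -> B < b -> Rabs (RInt p a b - 1) < eps.
Proof.
  intros He. destruct (Hint (ball 1 (mkposreal eps He)) (locally_ball 1 _)) as [Q R' HQ HR H].
  destruct HQ as [A HA]. destruct HR as [B HB].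
  exists A, B. intros a b Ha Hb. destruct (H a b (HA a Ha) (HB b Hb)) as [y [Hy1 Hy2]].
  simpl in Hy1. rewrite (is_RInt_unique _ _ _ _ Hy1). exact Hy2.
Qed.

Lemma Fex z : exists L, filterlim (fun a => RInt p a z) (Rbar_locally m_infty) (locally L).
Proof.
  apply (filterlim_locally_cauchy (F := Rbar_locally m_infty)).
  intros eps. destruct (total (eps/2)) as [A [B H]]. destruct eps; simpl; lra.
  exists (fun u => u < A). split. exists A; auto.
  intros u v Hu Hv. set (b0 := Rmax B z + 1).
  assert (HB : B < b0) by (unfold b0; generalize (Rmax_l B z); lra).
  generalize (H u b0 Hu HB) (H v b0 Hv HB). 
  rewrite <- (I_ch u z b0), <- (I_ch v z b0). intros H1 H2.
  change (Rabs (RInt p v z - RInt p u z) < eps).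
  apply Rabs_def2 in H1. apply Rabs_def2 in H2. apply Rabs_def1; lra.
Qed.

Lemma distF_eq z L : filterlim (fun a => RInt p a z) (Rbar_locally m_infty) (locally L) -> distF p z = L.
Proof.
  intros HL. unfold distF. apply (is_RInt_gen_unique (Fa := Rbar_locally m_infty) (Fb := at_point (T:=R_UniformSpace) z)).
  intros P [eps HP]. apply filterlim_locally with (eps := eps) in HL.
  destruct HL as [A HA].
  apply Filter_prod with (Q := fun a => a < A) (R := fun b => b = z).
  exists A; auto. reflexivity.
  intros a b Ha Hb. simpl. subst b. exists (RInt p a z). split.
  apply RInt_correct, exR. apply HP, HA, Ha.
Qed.

Definition F := distF p.

Lemma F_lim z : filterlim (fun a => RInt p a z) (Rbar_locally m_infty) (locally (F z)).
Proof.
  destruct (Fex z) as [L HL]. unfold F. rewrite (distF_eq z L HL). exact HL.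
Qed.

Lemma F_approx z eps : 0 < eps -> exists A, forall a, a < A -> a <= z /\ Rabs (RInt p a z - F z) < eps.
Proof.
  intros He. generalize (proj1 (filterlim_locally _ _) (F_lim z) (mkposreal eps He)).
  intros [A HA]. exists (Rmin A z). intros a Ha. split.
  generalize (Rmin_r A z); lra. apply HA. generalize (Rmin_l A z); lra.
Qed.

Lemma F_ch a b : F b - F a = RInt p a b.
Proof.
  apply Rminus_diag_uniq_sym. apply Rle_antisym; apply Rnot_lt_le; intro Hlt.
  - set (e := (RInt p a b - (F b - F a))). assert (0 < e/3) by (unfold e; lra).
    destruct (F_approx a (e/3) H) as [A1 H1]. destruct (F_approx b (e/3) H) as [A2 H2].
    set (c := Rmin A1 A2 - 1).
    assert (c < A1) by (unfold c; generalize (Rmin_l A1 A2); lra).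
    assert (c < A2) by (unfold c; generalize (Rmin_r A1 A2); lra).
    destruct (H1 c H0) as [_ K1]. destruct (H2 c H3) as [_ K2].
    rewrite <- (I_ch c a b) in K2.
    apply Rabs_def2 in K1; apply Rabs_def2 in K2. unfold e in *. lra.
  - set (e := ((F b - F a) - RInt p a b)). assert (0 < e/3) by (unfold e; lra).
    destruct (F_approx a (e/3) H) as [A1 H1]. destruct (F_approx b (e/3) H) as [A2 H2].
    set (c := Rmin A1 A2 - 1).
    assert (c < A1) by (unfold c; generalize (Rmin_l A1 A2); lra).
    assert (c < A2) by (unfold c; generalize (Rmin_r A1 A2); lra).
    destruct (H1 c H0) as [_ K1]. destruct (H2 c H3) as [_ K2].
    rewrite <- (I_ch c a b) in K2.
    apply Rabs_def2 in K1; apply Rabs_def2 in K2. unfold e in *. lra.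
Qed.

Lemma F_ge0 z : 0 <= F z.
Proof.
  apply Rnot_lt_le; intro Hlt.
  destruct (F_approx z (- F z) ltac:(lra)) as [A HA].
  destruct (HA (A - 1) ltac:(lra)) as [K1 K2].
  generalize (I_nonneg _ _ K1). apply Rabs_def2 in K2. lra.
Qed.

Lemma F_mono a b : a <= b -> F a <= F b.
Proof. intros. generalize (F_ch a b) (I_nonneg a b H). lra. Qed.

Lemma F_le1 z : F z <= 1.
Proof.
  apply Rnot_lt_le; intro Hlt. set (e := (F z - 1)/3).
  destruct (total e) as [A [B H]]. unfold e; lra.
  set (b := Rmax B z + 1).
  destruct (F_approx b e) as [A2 H2]. unfold e; lra.
  set (c := Rmin A A2 - 1).
  assert (c < A) by (unfold c; generalize (Rmin_l A A2); lra).
  assert (c < A2) by (unfold c; generalize (Rmin_r A A2); lra).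
  assert (B < b) by (unfold b; generalize (Rmax_l B z); lra).
  assert (z <= b) by (unfold b; generalize (Rmax_r B z); lra).
  generalize (H c b H0 H3). destruct (H2 c H1) as [_ K]. generalize (F_mono z b H4).
  intros K3 K4. apply Rabs_def2 in K; apply Rabs_def2 in K4. unfold e in *; lra.
Qed.

Lemma F_small eps : 0 < eps -> exists A, forall z, z <= A -> F z < eps.
Proof.
  intros He. destruct (total eps He) as [A [B H]].
  exists (A - 1). intros z Hz. set (b := Rmax B z + 1).
  assert (B < b) by (unfold b; generalize (Rmax_l B z); lra).
  generalize (H z b ltac:(lra) H0) (F_ch z b) (F_le1 b). intros K. apply Rabs_def2 in K. lra.
Qed.

Lemma F_big eps : 0 < eps -> exists B, forall z, B <= z -> 1 - eps < F z.
Proof.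
  intros He. destruct (total (eps/2)) as [A [B H]]. lra.
  exists (B + 1). intros z Hz.
  destruct (F_approx z (eps/2)) as [A2 H2]. lra.
  set (c := Rmin A A2 - 1).
  assert (c < A) by (unfold c; generalize (Rmin_l A A2); lra).
  assert (c < A2) by (unfold c; generalize (Rmin_r A A2); lra).
  generalize (H c z H0 ltac:(lra)). destruct (H2 c H1) as [_ K].
  intros K2. apply Rabs_def2 in K; apply Rabs_def2 in K2. lra.
Qed.


Lemma Lint e d : 0 < e -> 0 < d -> (forall x y, Rabs (x - y) < d -> Rabs (p x - p y) < e) ->
  forall x, (d/2)*(p x - e) <= F (x + d/2) - F x /\ (d/2)*(p x - e) <= F x - F (x - d/2).
Proof.
  intros He Hd H x. rewrite !F_ch. split.
  - replace (d/2) with (x + d/2 - x) at 1 by ring. rewrite Rmult_comm.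
    apply I_lower. lra. intros t Ht.
    assert (K: Rabs (t - x) < d) by (rewrite Rabs_right; lra).
    generalize (H t x K). intros K2. apply Rabs_def2 in K2. lra.
  - replace (d/2) with (x - (x - d/2)) at 1 by ring. rewrite Rmult_comm.
    apply I_lower. lra. intros t Ht.
    assert (K: Rabs (t - x) < d) by (rewrite Rabs_left1; lra).
    generalize (H t x K). intros K2. apply Rabs_def2 in K2. lra.
Qed.

Lemma p_bound : exists Bp, 0 < Bp /\ forall x, p x <= Bp.
Proof.
  destruct (Huc 1 Rlt_0_1) as [d [Hd H]]. exists (1 + 2/d). split.
  assert (0 < 2/d) by (apply Rdiv_lt_0_compat; lra). lra.
  intros x. destruct (Lint 1 d Rlt_0_1 Hd H x) as [K _].
  generalize (F_le1 (x + d/2)) (F_ge0 x). intros K1 K2.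
  assert (d/2 * (p x - 1) <= 1) by lra.
  assert (p x - 1 <= 2/d).
  { apply (Rmult_le_reg_l (d/2)). lra. replace (d/2*(2/d)) with 1 by (field; lra). lra. }
  lra.
Qed.

Lemma F_lip Bp : (forall x, p x <= Bp) -> forall a b, a <= b -> F b - F a <= Bp * (b - a).
Proof. intros HB a b Hab. rewrite F_ch. apply I_upper; auto. Qed.

Lemma L_lemma eps : 0 < eps -> exists eta, 0 < eta /\
  forall x y, Rabs (F x - F y) < eta -> Rabs (p x - p y) < eps.
Proof.
  intros He. destruct (Huc (eps/2) ltac:(lra)) as [d [Hd H]].
  exists ((d/2)*(eps/2)). split. apply Rmult_lt_0_compat; lra.
  assert (Main : forall x y, x <= y -> Rabs (F x - F y) < d / 2 * (eps / 2) -> Rabs (p x - p y) < eps).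
  { intros x y Hxy HF. apply Rnot_le_lt. intro Hc.
    destruct (Rlt_or_le (y - x) d) as [Hs|Hs].
    - generalize (H x y ltac:(rewrite Rabs_left1; lra)). lra.
    - generalize (Hpos x) (Hpos y). intros Px Py.
      assert (Hm : eps <= p x \/ eps <= p y).
      { destruct (Rle_or_lt eps (p x)); auto. destruct (Rle_or_lt eps (p y)); auto.
        exfalso. assert (Rabs (p x - p y) < eps) by (apply Rabs_def1; lra). lra. }
      rewrite Rabs_minus_sym in HF. apply Rabs_def2 in HF. destruct HF as [HF _].
      destruct (Lint (eps/2) d ltac:(lra) Hd H x) as [K1 _].
      destruct (Lint (eps/2) d ltac:(lra) Hd H y) as [_ K2].
      generalize (F_mono (x + d/2) y ltac:(lra)) (F_mono x (y - d/2) ltac:(lra)). intros M1 M2.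
      destruct Hm as [Hm|Hm].
      + assert (d/2*(eps/2) <= d/2*(p x - eps/2)) by (apply Rmult_le_compat_l; lra). lra.
      + assert (d/2*(eps/2) <= d/2*(p y - eps/2)) by (apply Rmult_le_compat_l; lra). lra. }
  intros x y HF. destruct (Rle_or_lt x y). auto.
  rewrite Rabs_minus_sym. apply Main. lra. rewrite Rabs_minus_sym. auto.
Qed.

Lemma L0_lemma eps : 0 < eps -> exists eta, 0 < eta /\
  forall x, (F x < eta \/ 1 - eta < F x) -> p x < eps.
Proof.
  intros He. destruct (Huc (eps/2) ltac:(lra)) as [d [Hd H]].
  exists ((d/2)*(eps/2)). split. apply Rmult_lt_0_compat; lra.
  intros x Hx. apply Rnot_le_lt. intro Hc.
  destruct (Lint (eps/2) d ltac:(lra) Hd H x) as [K1 K2].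
  assert (d/2*(eps/2) <= d/2*(p x - eps/2)) by (apply Rmult_le_compat_l; lra).
  generalize (F_ge0 (x - d/2)) (F_le1 (x + d/2)). intros. lra.
Qed.

Lemma small_p x : (forall eps, 0 < eps -> p x < eps) -> p x = 0.
Proof.
  intros H. generalize (Hpos x). intros. destruct (Req_dec (p x) 0); auto.
  generalize (H (p x) ltac:(lra)). lra.
Qed.

Lemma F0_p x : F x = 0 -> p x = 0.
Proof.
  intros Hx. apply small_p. intros eps He. destruct (L0_lemma eps He) as [eta [Heta H]].
  apply H. lra.
Qed.

Lemma F1_p x : F x = 1 -> p x = 0.
Proof.
  intros Hx. apply small_p. intros eps He. destruct (L0_lemma eps He) as [eta [Heta H]].
  apply H. lra.
Qed.

Lemma Z0 z : (forall v, v < z -> p v = 0) -> F z = 0.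
Proof.
  intros H. assert (E : forall v, v < z -> F z = F v).
  { intros v Hv. generalize (F_ch v z). rewrite (RInt_ext p (fun _ => 0)).
    rewrite RInt_const. unfold scal; simpl; unfold mult; simpl. intros; lra.
    intros x Hx. rewrite Rmin_left in Hx by lra. rewrite Rmax_right in Hx by lra. apply H. lra. }
  apply Rle_antisym. 2: apply F_ge0. apply Rnot_lt_le. intro Hc.
  destruct (F_small (F z) Hc) as [A HA]. set (v := Rmin A (z - 1)).
  generalize (HA v (Rmin_l _ _)). rewrite <- E. lra. unfold v. generalize (Rmin_r A (z-1)). lra.
Qed.

Lemma Z1 z : (forall v, z < v -> p v = 0) -> F z = 1.
Proof.
  intros H. assert (E : forall v, z < v -> F z = F v).
  { intros v Hv. generalize (F_ch z v). rewrite (RInt_ext p (fun _ => 0)).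
    rewrite RInt_const. unfold scal; simpl; unfold mult; simpl. intros; lra.
    intros x Hx. rewrite Rmin_left in Hx by lra. rewrite Rmax_right in Hx by lra. apply H. lra. }
  apply Rle_antisym. apply F_le1. apply Rnot_lt_le. intro Hc.
  destruct (F_big (1 - F z) ltac:(lra)) as [B HB]. set (v := Rmax B (z + 1)).
  generalize (HB v (Rmax_l _ _)). rewrite <- (E v). lra. unfold v. generalize (Rmax_r B (z+1)). lra.
Qed.

Lemma Z0' z : F z = 0 -> forall v, v <= z -> p v = 0.
Proof. intros H v Hv. apply F0_p. generalize (F_mono v z Hv) (F_ge0 v). lra. Qed.

Lemma Z1' z : F z = 1 -> forall v, z <= v -> p v = 0.
Proof. intros H v Hv. apply F1_p. generalize (F_mono z v Hv) (F_le1 v). lra. Qed.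

Lemma F_cont x : filterlim F (locally x) (locally (F x)).
Proof.
  destruct p_bound as [Bp [HB0 HB]].
  apply filterlim_locally. intros eps. exists (mkposreal (eps / Bp) (Rdiv_lt_0_compat _ _ (cond_pos eps) HB0)).
  intros y Hy. change (Rabs (F y - F x) < eps). change (Rabs (y - x) < eps / Bp) in Hy.
  assert (K : Bp * Rabs (y - x) < eps).
  { apply (Rmult_lt_reg_r (/Bp)). apply Rinv_0_lt_compat; lra.
    replace (Bp * Rabs (y - x) * / Bp) with (Rabs (y - x)) by (field; lra). exact Hy. }
  destruct (Rle_or_lt x y).
  - generalize (F_lip Bp HB x y H) (F_mono x y H). rewrite Rabs_right in K by lra.
    intros. rewrite Rabs_right; lra.
  - generalize (F_lip Bp HB y x ltac:(lra)) (F_mono y x ltac:(lra)). rewrite Rabs_left in K by lra.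
    intros. rewrite Rabs_left1; lra.
Qed.

Lemma F_ivt u : 0 < u < 1 -> exists x, F x = u.
Proof.
  intros Hu. destruct (F_small u ltac:(lra)) as [A HA]. destruct (F_big (1 - u) ltac:(lra)) as [B HB].
  assert (Hc : continuity F). { intros x. apply continuity_pt_filterlim. apply F_cont. }
  destruct (IVT_gen F A B u Hc) as [x [_ Hx]].
  generalize (HA A (Rle_refl _)) (HB B (Rle_refl _)) (Rmin_l (F A) (F B)) (Rmax_r (F A) (F B)). lra.
  exists x; exact Hx.
Qed.

Lemma glb_ok (E : Rbar -> Prop) : Rbar_is_glb E (Rbar_glb E).
Proof. exact (proj2_sig (Rbar_ex_glb E)). Qed.

Lemma quant0 : quantile p 0 = m_infty.
Proof.
  unfold quantile. destruct (glb_ok (fun z => 0 <= distF_bar p z)) as [H1 H2].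
  assert (K : Rbar_le (Rbar_glb (fun z => 0 <= distF_bar p z)) m_infty).
  { apply H1. simpl. lra. }
  destruct (Rbar_glb _); simpl in K; tauto.
Qed.

Lemma pJ z : p z = Jfun p (F z).
Proof.
  destruct (Req_dec (F z) 0) as [H0|H0].
  { rewrite H0. unfold Jfun. rewrite quant0. simpl. apply F0_p; auto. }
  assert (Hu : 0 < F z) by (generalize (F_ge0 z); lra).
  destruct p_bound as [Bp [HB0 HB]].
  unfold Jfun, quantile. set (u := F z) in *.
  set (E := fun w => u <= distF_bar p w).
  destruct (glb_ok E) as [H1 H2].
  destruct (F_small u Hu) as [A HA].
  assert (Hlow : forall c, (u > F c) -> Rbar_is_lower_bound E (Finite c)).
  { intros c Hc x Ex. unfold E in Ex. destruct x as [w| |]; simpl in *; auto.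
    apply Rnot_lt_le; intro Hw. generalize (F_mono w c ltac:(lra)). unfold F in *. lra. lra. }
  assert (K1 : Rbar_le (Finite (A - 1)) (Rbar_glb E)).
  { apply H2, Hlow. generalize (HA (A - 1) ltac:(lra)); lra. }
  assert (K2 : Rbar_le (Rbar_glb E) (Finite z)). { apply H1. unfold E; simpl. unfold u, F. lra. }
  destruct (Rbar_glb E) as [r| |] eqn:Hr; simpl in K1, K2; try tauto.
  simpl.
  assert (Fr : u <= F r).
  { apply Rnot_lt_le; intro Hc. set (h := (u - F r) / (2 * Bp)).
    assert (Hh : 0 < h) by (unfold h; apply Rdiv_lt_0_compat; lra).
    assert (Hh2 : Bp * h < u - F r).
    { unfold h. replace (Bp * ((u - F r) / (2 * Bp))) with ((u - F r)/2) by (field; lra). lra. }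
    generalize (F_lip Bp HB r (r + h) ltac:(lra)). intros K.
    generalize (H2 (Finite (r + h)) (Hlow (r + h) ltac:(lra))). simpl. lra. }
  assert (Fr2 : F r = u). { generalize (F_mono r z K2). unfold u in *. lra. }
  apply Rminus_diag_uniq_sym. apply Rabs_eq_0. apply Rle_antisym. 2: apply Rabs_pos.
  apply Rnot_lt_le; intro Hc. destruct (L_lemma _ Hc) as [eta [Heta HL]].
  generalize (HL r z). rewrite Fr2. unfold u. rewrite Rminus_diag, Rabs_R0. intros K; generalize (K Heta). lra.
Qed.

Lemma J0 : Jfun p 0 = 0.
Proof. unfold Jfun. rewrite quant0. reflexivity. Qed.

Lemma J1 : Jfun p 1 = 0.
Proof.
  destruct (classic (exists x, F x = 1)) as [[x Hx]|Hn].
  - rewrite <- Hx, <- pJ. apply F1_p; auto.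
  - unfold Jfun, quantile. set (E := fun w => 1 <= distF_bar p w).
    destruct (glb_ok E) as [H1 H2].
    assert (K : Rbar_le p_infty (Rbar_glb E)).
    { apply H2. intros x Ex. unfold E in Ex. destruct x as [w| |]; simpl in *; auto.
      apply Hn. exists w. generalize (F_le1 w). unfold F. lra. lra. }
    destruct (Rbar_glb E); simpl in K; tauto.
Qed.

Lemma Jrep u : 0 <= u <= 1 -> ((u = 0 \/ u = 1) /\ Jfun p u = 0) \/ exists x, F x = u /\ Jfun p u = p x.
Proof.
  intros Hu. destruct (Req_dec u 0) as [H|H]. left. split; auto. subst; apply J0.
  destruct (Req_dec u 1) as [H'|H']. left. split; auto. subst; apply J1.
  right. destruct (F_ivt u ltac:(lra)) as [x Hx]. exists x. split; auto. rewrite <- Hx, <- pJ. reflexivity.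
Qed.

Lemma J_nonneg u : 0 <= Jfun p u.
Proof. unfold Jfun. destruct (quantile p u); simpl; auto; lra. Qed.

Lemma J_bound Bp : (forall x, p x <= Bp) -> 0 <= Bp -> forall u, Jfun p u <= Bp.
Proof. intros HB HB0 u. unfold Jfun. destruct (quantile p u); simpl; auto. Qed.

Lemma J_unif eps : 0 < eps -> exists eta, 0 < eta /\ forall u v, 0 <= u <= 1 -> 0 <= v <= 1 ->
  Rabs (u - v) < eta -> Rabs (Jfun p u - Jfun p v) < eps.
Proof.
  intros He. destruct (L_lemma eps He) as [e1 [He1 H1]]. destruct (L0_lemma eps He) as [e2 [He2 H2]].
  exists (Rmin 1 (Rmin e1 e2)). split. apply Rmin_pos; [lra| apply Rmin_pos; lra].
  generalize (Rmin_l 1 (Rmin e1 e2)) (Rmin_r 1 (Rmin e1 e2)) (Rmin_l e1 e2) (Rmin_r e1 e2).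
  set (m := Rmin 1 (Rmin e1 e2)). set (m' := Rmin e1 e2). intros Q1 Q2 Q3 Q4.
  intros u v Hu Hv Huv. apply Rabs_def2 in Huv.
  destruct (Jrep u Hu) as [[Eu Ju]|[x [Fx Ju]]]; destruct (Jrep v Hv) as [[Ev Jv]|[y [Fy Jv]]];
    rewrite Ju, Jv.
  - rewrite Rminus_diag, Rabs_R0. auto.
  - rewrite Rabs_minus_sym, Rminus_0_r, Rabs_right by apply Rle_ge, Hpos. apply H2. lra.
  - rewrite Rminus_0_r, Rabs_right by apply Rle_ge, Hpos. apply H2. lra.
  - apply H1. rewrite Fx, Fy. apply Rabs_def1; lra.
Qed.


Lemma S0_iff z : F z = 0 <-> Rbar_le z (supp_inf p).
Proof.
  unfold supp_inf. destruct (Glb_Rbar_correct (fun z => 0 < p z)) as [lb gr]. split.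
  - intros Hz. apply gr. intros x Hx. simpl. apply Rnot_lt_le. intro C.
    generalize (Z0' z Hz x ltac:(lra)). lra.
  - intros Hz. apply Z0. intros v Hv. destruct (Req_dec (p v) 0) as [E|E]; auto.
    exfalso. assert (K : 0 < p v) by (generalize (Hpos v); lra).
    generalize (Rbar_le_trans _ _ _ Hz (lb v K)). simpl. lra.
Qed.

Lemma S1_iff z : F z = 1 <-> Rbar_le (supp_sup p) z.
Proof.
  unfold supp_sup. destruct (Lub_Rbar_correct (fun z => 0 < p z)) as [ub lu]. split.
  - intros Hz. apply lu. intros x Hx. simpl. apply Rnot_lt_le. intro C.
    generalize (Z1' z Hz x ltac:(lra)). lra.
  - intros Hz. apply Z1. intros v Hv. destruct (Req_dec (p v) 0) as [E|E]; auto.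
    exfalso. assert (K : 0 < p v) by (generalize (Hpos v); lra).
    generalize (Rbar_le_trans _ _ _ (ub v K) Hz). simpl. lra.
Qed.

Lemma U0 : (exists z, F z = 0) -> forall M, exists h, 0 < h < 1 /\ M * h < Jfun p h.
Proof.
  intros [z Hz] M. apply S0_iff in Hz.
  destruct (supp_inf p) as [a0| |] eqn:Ea; simpl in Hz; try tauto.
  2:{ exfalso. destruct (F_big (1/2) ltac:(lra)) as [B HB]. generalize (HB B (Rle_refl _)).
      assert (F B = 0) by (apply S0_iff; rewrite Ea; simpl; auto). lra. }
  assert (Fa : F a0 = 0) by (apply S0_iff; rewrite Ea; simpl; lra).
  assert (Fpos : forall x, a0 < x -> 0 < F x).
  { intros x Hx. destruct (Req_dec (F x) 0) as [E|E]. apply S0_iff in E. rewrite Ea in E. simpl in E. lra.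
    generalize (F_ge0 x). lra. }
  apply NNPP. intro N.
  set (M1 := Rabs M + 1). assert (HM1 : 0 < M1) by (unfold M1; generalize (Rabs_pos M); lra).
  assert (HJ : forall h, 0 < h < 1 -> Jfun p h <= M1 * h).
  { intros h Hh. apply Rnot_lt_le. intro C. apply N. exists h. split; auto.
    generalize (Rle_abs M). unfold M1 in C. nra. }
  destruct p_bound as [Bp [HB0 HB]].
  set (w := Rmin (1 / (4 * M1)) (1 / (2 * Bp))).
  assert (Hw : 0 < w) by (unfold w; apply Rmin_pos; apply Rdiv_lt_0_compat; lra).
  generalize (Rmin_l (1 / (4 * M1)) (1 / (2 * Bp))) (Rmin_r (1 / (4 * M1)) (1 / (2 * Bp))). fold w. intros W1 W2.
  set (x := a0 + w).
  assert (Fx1 : F x <= 1/2).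
  { generalize (F_lip Bp HB a0 x ltac:(unfold x; lra)). unfold x. replace (a0 + w - a0) with w by ring.
    intros K. assert (Bp * w <= Bp * (1 / (2 * Bp))) by (apply Rmult_le_compat_l; lra).
    replace (Bp * (1 / (2 * Bp))) with (1/2) in H by (field; lra). lra. }
  assert (Fx0 : 0 < F x) by (apply Fpos; unfold x; lra).
  assert (Pt : forall t, a0 <= t <= x -> p t <= M1 * F x).
  { intros t Ht. destruct (Req_dec (F t) 0) as [E|E]. rewrite (F0_p t E). nra.
    generalize (F_ge0 t) (F_mono t x ltac:(lra)). intros G1 G2.
    rewrite (pJ t). eapply Rle_trans. apply HJ. lra. nra. }
  generalize (I_upper a0 x (M1 * F x) ltac:(unfold x; lra) Pt). rewrite <- F_ch, Fa.
  unfold x. replace (a0 + w - a0) with w by ring. intros K.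
  assert (M1 * w <= M1 * (1 / (4 * M1))) by (apply Rmult_le_compat_l; lra).
  replace (M1 * (1 / (4 * M1))) with (1/4) in H by (field; lra). fold x in K. nra.
Qed.

Lemma U1 : (exists z, F z = 1) -> forall M, exists u, 0 < u < 1 /\ M * (1 - u) < Jfun p u.
Proof.
  intros [z Hz] M. apply S1_iff in Hz.
  destruct (supp_sup p) as [b0| |] eqn:Eb; simpl in Hz; try tauto.
  2:{ exfalso. destruct (F_small (1/2) ltac:(lra)) as [A HA]. generalize (HA A (Rle_refl _)).
      assert (F A = 1) by (apply S1_iff; rewrite Eb; simpl; auto). lra. }
  assert (Fb : F b0 = 1) by (apply S1_iff; rewrite Eb; simpl; lra).
  assert (Flt : forall x, x < b0 -> F x < 1).
  { intros x Hx. destruct (Req_dec (F x) 1) as [E|E]. apply S1_iff in E. rewrite Eb in E. simpl in E. lra.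
    generalize (F_le1 x). lra. }
  apply NNPP. intro N.
  set (M1 := Rabs M + 1). assert (HM1 : 0 < M1) by (unfold M1; generalize (Rabs_pos M); lra).
  assert (HJ : forall h, 0 < h < 1 -> Jfun p h <= M1 * (1 - h)).
  { intros h Hh. apply Rnot_lt_le. intro C. apply N. exists h. split; auto.
    generalize (Rle_abs M). unfold M1 in C. nra. }
  destruct p_bound as [Bp [HB0 HB]].
  set (w := Rmin (1 / (4 * M1)) (1 / (2 * Bp))).
  assert (Hw : 0 < w) by (unfold w; apply Rmin_pos; apply Rdiv_lt_0_compat; lra).
  generalize (Rmin_l (1 / (4 * M1)) (1 / (2 * Bp))) (Rmin_r (1 / (4 * M1)) (1 / (2 * Bp))). fold w. intros W1 W2.
  set (x := b0 - w).
  assert (Fx1 : 1/2 <= F x).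
  { generalize (F_lip Bp HB x b0 ltac:(unfold x; lra)). unfold x. replace (b0 - (b0 - w)) with w by ring.
    intros K. assert (Bp * w <= Bp * (1 / (2 * Bp))) by (apply Rmult_le_compat_l; lra).
    replace (Bp * (1 / (2 * Bp))) with (1/2) in H by (field; lra). lra. }
  assert (Fx0 : F x < 1) by (apply Flt; unfold x; lra).
  assert (Pt : forall t, x <= t <= b0 -> p t <= M1 * (1 - F x)).
  { intros t Ht. destruct (Req_dec (F t) 1) as [E|E]. rewrite (F1_p t E). nra.
    generalize (F_le1 t) (F_mono x t ltac:(lra)). intros G1 G2.
    rewrite (pJ t). eapply Rle_trans. apply HJ. lra. nra. }
  generalize (I_upper x b0 (M1 * (1 - F x)) ltac:(unfold x; lra) Pt). rewrite <- F_ch, Fb.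
  unfold x. replace (b0 - (b0 - w)) with w by ring. intros K.
  assert (M1 * w <= M1 * (1 / (4 * M1))) by (apply Rmult_le_compat_l; lra).
  replace (M1 * (1 / (4 * M1))) with (1/4) in H by (field; lra). fold x in K. nra.
Qed.


Lemma HJe0 eps : 0 < eps -> exists eta, 0 < eta /\ forall v, 0 <= v < eta -> Jfun p v < eps.
Proof.
  intros He. destruct (L0_lemma eps He) as [eta [Heta H]]. exists (Rmin eta 1). split. apply Rmin_pos; lra.
  intros v Hv. generalize (Rmin_l eta 1) (Rmin_r eta 1). intros.
  destruct (Jrep v ltac:(lra)) as [[_ E]|[x [Fx E]]]; rewrite E. lra. apply H. lra.
Qed.

Lemma HJe1 eps : 0 < eps -> exists eta, 0 < eta /\ forall v, 1 - eta < v <= 1 -> Jfun p v < eps.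
Proof.
  intros He. destruct (L0_lemma eps He) as [eta [Heta H]]. exists (Rmin eta 1). split. apply Rmin_pos; lra.
  intros v Hv. generalize (Rmin_l eta 1) (Rmin_r eta 1). intros.
  destruct (Jrep v ltac:(lra)) as [[_ E]|[x [Fx E]]]; rewrite E. lra. apply H. lra.
Qed.

Definition Hh := lcm01 (Jfun p).

Lemma Bp_ex : exists Bp, 0 < Bp /\ (forall x, p x <= Bp) /\ (forall u, Jfun p u <= Bp).
Proof.
  destruct p_bound as [Bp [H0 H1]]. exists Bp. repeat split; auto. apply J_bound; auto. lra.
Qed.

Lemma Hh_facts : concave_on01 Hh /\ Hh 0 = 0 /\ Hh 1 = 0 /\ continuous_on01 Hh /\
  (forall eps, 0 < eps -> exists dl, 0 < dl <= 1 /\ forall v, 0 <= v < dl -> Hh v < eps) /\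
  (forall eps, 0 < eps -> exists dl, 0 < dl <= 1 /\ forall v, 1 - dl < v <= 1 -> Hh v < eps) /\
  (forall u, 0 <= u <= 1 -> Jfun p u <= Hh u).
Proof.
  destruct Bp_ex as [Bp [B0 [B1 B2]]]. unfold Hh.
  split. apply (lcm_conc _ Bp B2).
  split. apply (lcm0 _ J_nonneg Bp B2 HJe0).
  split. apply (lcm1 _ J_nonneg Bp B2 HJe1).
  split. apply (lcm_cont _ J_nonneg Bp B2 HJe0 HJe1).
  split. apply (lcm_small0 _ J_nonneg Bp B2 HJe0).
  split. apply (lcm_small1 _ J_nonneg Bp B2 HJe1).
  apply (lcm_ge _ Bp B2).
Qed.

Lemma psi_zero z : F z = 0 -> psi_star p z = p_infty.
Proof.
  intros Hz. unfold psi_star. change (distF p z) with (F z). rewrite Hz.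
  destruct Hh_facts as [Hc [H0 [H1 [_ [_ [_ Hge]]]]]].
  rewrite rd01_ne by lra. apply (rd_zero Hh Hc H0).
  intros M. destruct (U0 (ex_intro _ z Hz) M) as [h [K1 K2]]. exists h. split; auto.
  generalize (Hge h ltac:(lra)). fold Hh. lra.
Qed.

Lemma psi_one z : F z = 1 -> psi_star p z = m_infty.
Proof.
  intros Hz. unfold psi_star. change (distF p z) with (F z). rewrite Hz.
  destruct Hh_facts as [Hc [H0 [H1 [_ [_ [S1' Hge]]]]]].
  apply (rd_one Hh Hc H1).
  intros eps He. destruct (S1' eps He) as [dl [D1 D2]]. exists dl. split. lra. exact D2.
  intros M. destruct (U1 (ex_intro _ z Hz) M) as [h [K1 K2]]. exists h. split; auto.
  generalize (Hge h ltac:(lra)). fold Hh. lra.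
Qed.

Lemma psi_mid_eq z : F z <> 1 -> psi_star p z = right_deriv Hh (F z).
Proof. intros. unfold psi_star. apply rd01_ne. exact H. Qed.

Lemma Rbar_le_pinf x : Rbar_le x p_infty.
Proof. destruct x; simpl; auto. Qed.

Lemma main_sec :
  continuous_on01 (Jfun p) /\
  continuous_on01 (lcm01 (Jfun p)) /\
  (forall z : R, p z = Jfun p (distF p z)) /\
  (forall z1 z2 : R, z1 <= z2 -> Rbar_le (psi_star p z2) (psi_star p z1)) /\
  (forall z : R, filterlim (psi_star p) (at_right z) (ext_nbhs (psi_star p z))) /\
  (forall z : R, (exists r : R, psi_star p z = Finite r) <->
                 (Rbar_lt (supp_inf p) z /\ Rbar_lt z (supp_sup p))).
Proof.
  destruct Hh_facts as [Hc [H0 [H1 [Hcont [S0' [S1' Hge]]]]]].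
  destruct Bp_ex as [Bp [B0 [B1 B2]]].
  split; [|split; [|split; [|split; [|split]]]].
  - apply cont01_of. intros u Hu eps He. destruct (J_unif eps He) as [eta [Heta K]].
    exists eta. split; auto.
  - exact Hcont.
  - intros z. apply pJ.
  - intros z1 z2 Hz.
    destruct (Req_dec (F z2) 1) as [E2|E2]. rewrite (psi_one z2 E2). simpl. auto.
    destruct (Req_dec (F z1) 0) as [E1|E1]. rewrite (psi_zero z1 E1). apply Rbar_le_pinf.
    generalize (F_mono z1 z2 Hz) (F_ge0 z1) (F_le1 z2). intros M1 M2 M3.
    assert (E1' : F z1 <> 1) by lra.
    rewrite (psi_mid_eq z1 E1'), (psi_mid_eq z2 E2).
    destruct (Req_dec (F z1) (F z2)) as [Eq|Ne]. rewrite Eq. apply Rbar_le_refl.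
    destruct (rd_mid Hh Hc (F z1) ltac:(lra)) as [d1 [D1 _]].
    destruct (rd_mid Hh Hc (F z2) ltac:(lra)) as [d2 [D2 _]].
    rewrite D1, D2. simpl. apply (rd_mono Hh Hc (F z1) (F z2)); auto; lra.
  - intros z P HP. unfold filtermap.
    destruct (Req_dec (F z) 1) as [E1|E1].
    { rewrite (psi_one z E1) in HP. destruct HP as [M HM].
      exists (mkposreal 1 Rlt_0_1). intros z' _ Hz'.
      assert (F z' = 1) by (generalize (F_mono z z' ltac:(lra)) (F_le1 z'); lra).
      rewrite (psi_one z' H). apply HM. simpl. auto. }
    destruct (Req_dec (F z) 0) as [E0|E0].
    { rewrite (psi_zero z E0) in HP. destruct HP as [M HM].
      destruct (rd_rc0 Hh Hc M H0) as [dl [Hdl K]].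
      { intros eps He. destruct (S0' eps He) as [dl [D1 D2]]. exists dl. split. lra. exact D2. }
      { intros M'. destruct (U0 (ex_intro _ z E0) M') as [h [K1 K2]]. exists h. split; auto.
        generalize (Hge h ltac:(lra)). fold Hh. lra. }
      exists (mkposreal (dl / Bp) (Rdiv_lt_0_compat _ _ Hdl B0)). intros z' Hz1 Hz2.
      change (Rabs (z' - z) < dl / Bp) in Hz1. rewrite Rabs_right in Hz1 by lra.
      generalize (F_lip Bp B1 z z' ltac:(lra)) (F_mono z z' ltac:(lra)). rewrite E0. intros L1 L2.
      assert (Fz' : F z' < dl).
      { assert (Bp * (z' - z) < dl).
        { apply (Rmult_lt_reg_r (/Bp)). apply Rinv_0_lt_compat; lra.
          replace (Bp * (z' - z) * / Bp) with (z' - z) by (field; lra). exact Hz1. }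
        lra. }
      destruct (Req_dec (F z') 0) as [Z|Z]. rewrite (psi_zero z' Z). apply HM. simpl. auto.
      destruct (K (F z') ltac:(lra)) as [Lt1 [dv [Ev Mv]]].
      rewrite psi_mid_eq by lra. rewrite Ev. apply HM. simpl. exact Mv. }
    assert (Hu : 0 < F z < 1) by (generalize (F_ge0 z) (F_le1 z); lra).
    destruct (rd_mid Hh Hc (F z) Hu) as [d [Dd _]].
    rewrite (psi_mid_eq z E1), Dd in HP. destruct HP as [eps HM].
    destruct (rd_rc Hh Hc (F z) d eps Hu Dd (cond_pos eps)) as [dl [Hdl K]].
    exists (mkposreal (dl / Bp) (Rdiv_lt_0_compat _ _ Hdl B0)). intros z' Hz1 Hz2.
    change (Rabs (z' - z) < dl / Bp) in Hz1. rewrite Rabs_right in Hz1 by lra.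
    generalize (F_lip Bp B1 z z' ltac:(lra)) (F_mono z z' ltac:(lra)). intros L1 L2.
    assert (Bp * (z' - z) < dl).
    { apply (Rmult_lt_reg_r (/Bp)). apply Rinv_0_lt_compat; lra.
      replace (Bp * (z' - z) * / Bp) with (z' - z) by (field; lra). exact Hz1. }
    destruct (K (F z') ltac:(lra)) as [Lt1 [dv [Ev Mv]]].
    rewrite psi_mid_eq by lra. rewrite Ev. apply HM. exists dv. split; auto.
  - intros z. split.
    + intros [r Hr].
      destruct (Req_dec (F z) 0) as [E0|E0]. rewrite (psi_zero z E0) in Hr. discriminate.
      destruct (Req_dec (F z) 1) as [E1|E1]. rewrite (psi_one z E1) in Hr. discriminate.
      split; apply Rbar_not_le_lt; intro C.
      apply E0. apply S0_iff. exact C. apply E1. apply S1_iff. exact C.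
    + intros [A1 A2].
      assert (E0 : F z <> 0). { intro E. apply S0_iff in E. apply (Rbar_lt_not_le _ _ A1 E). }
      assert (E1 : F z <> 1). { intro E. apply S1_iff in E. apply (Rbar_lt_not_le _ _ A2 E). }
      assert (Hu : 0 < F z < 1) by (generalize (F_ge0 z) (F_le1 z); lra).
      destruct (rd_mid Hh Hc (F z) Hu) as [d [Dd _]].
      exists d. rewrite (psi_mid_eq z E1). exact Dd.
Qed.

End Dens.

Theorem lemma2p1 (p0 : R -> R) :
  is_density p0 -> unif_cont p0 ->
  continuous_on01 (Jfun p0) /\
  continuous_on01 (lcm01 (Jfun p0)) /\
  (forall z : R, p0 z = Jfun p0 (distF p0 z)) /\
  (forall z1 z2 : R, z1 <= z2 -> Rbar_le (psi_star p0 z2) (psi_star p0 z1)) /\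
  (forall z : R, filterlim (psi_star p0) (at_right z) (ext_nbhs (psi_star p0 z))) /\
  (forall z : R, (exists r : R, psi_star p0 z = Finite r) <->
                 (Rbar_lt (supp_inf p0) z /\ Rbar_lt z (supp_sup p0))).
Proof.
  intros [Hpos Hint] Huc. exact (main_sec p0 Hpos Hint Huc).
Qed.
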